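(* In the setting described in the context, if $\psi\in\mathrm{opt}(\mathcal{O},R)$ and $x\in R^\times$, then $x\psi x^{-1}\in\mathrm{opt}(\mathcal{O},R)$; that is, conjugation by $\overline{R}^\times=R^\times/\mathbb{Z}[1/p]^\times$ preserves oriented optimal embeddings.
   Context: Let $p$ be a prime and $B$ a quaternion algebra over $\mathbb{Q}$ split at $p$. Let $N^-$ be the product of the finite primes where $B$ ramifies and $N^+$ a positive integer coprime to $N^-p$. Let $R$ be an Eichler $\mathbb{Z}[1/p]$-order of level $N^+$ in $B$. For a prime $\ell\nmid N^-$, identify $B_\ell=B\otimes\mathbb{Q}_\ell\cong M_2(\mathbb{Q}_\ell)$ and let $\mathcal{T}_\ell$ be the Bruhat–Tits tree; maximal orders of $B_\ell$ correspond to vertices ($[\Lambda]\mapsto\mathrm{End}(\Lambda)$), with $B_\ell^\times/\mathbb{Q}_\ell^\times$ acting by conjugation, and $R_\ell$ corresponds to the path $\eta_{R_\ell}$ of length $v_\ell(N^+)$ joining the vertices of the two maximal orders whose intersection is $R_\ell$. Let $K$ be a quadratic field and $\mathcal{O}=\mathcal{O}_d[1/p]$, $\mathcal{O}_d=\mathbb{Z}[\frac{d+\sqrt d}{2}]$, with $p^2\nmid d$, $(d,N^-)=1$, and $\ell\nmid d$ whenever $\ell^2\mid N^+$. An optimal embedding is a $\mathbb{Q}$-algebra embedding $\psi\colon K\to B$ with $\psi(K)\cap R=\psi(\mathcal{O})$; for $\ell\mid N^+$, $\psi(K_\ell)^\times$ fixes exactly two ends of $\mathcal{T}_\ell$ and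 $\mathcal{G}_\psi$ is the geodesic joining them. Fixed orientation data: for $\ell\mid N^-$, ring morphisms $\nu_\ell\colon R_\ell\to\mathbb{F}_{\ell^2}$, $\mu_\ell\colon\mathcal{O}_\ell\to\mathbb{F}_{\ell^2}$; for $\ell\mid N^+$, a maximal order $S_\ell\supseteq R_\ell$, i.e. an endpoint $v_{S_\ell}$ of $\eta_{R_\ell}$; for $\ell\mid N^+$, $\ell\nmid d$, an isomorphism $\mu_\ell\colon K_\ell^\times/\mathcal{O}_\ell^\times\mathbb{Q}_\ell^\times\to\mathbb{Z}$. An optimal $\psi$ is oriented if: for $\ell\mid N^-$, $\nu_\ell\circ\psi=\mu_\ell$ on $\mathcal{O}_\ell$; for $\ell\mid N^+$, $\ell\nmid d$ (then $\eta_{R_\ell}\subset\mathcal{G}_\psi$), the endpoints of $\eta_{R_\ell}$ are $v_{S_\ell}$ and $T_\psi^{v_\ell(N^+)}(v_{S_\ell})$, where $T_\psi=\psi(\text{an element of }\mu_\ell^{-1}(1))$ acts on $\mathcal{G}_\psi$ as a translation; for $\ell\mid N^+$, $\ell\mid d$ (then $\eta_{R_\ell}$ is an edge not contained in $\mathcal{G}_\psi$), $v_{S_\ell}$ is the endpoint of $\eta_{R_\ell}$ farther from $\mathcal{G}_\psi$. $\mathrm{opt}(\mathcal{O},R)$ denotes the set of oriented optimal embeddings. *)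

(* Defs.v *)
From HB Require Import structures.
From mathcomp Require Import all_boot all_order all_algebra.
Unset Printing Implicit Defensive.
Import Order.TTheory GRing.Theory Num.Theory.
Local Open Scope ring_scope.

(* i^2 = a, j^2 = b, k = ij = -ji. *)
Record quat := Quat { q0 : rat; q1 : rat; q2 : rat; q3 : rat }.

Definition qadd (x y : quat) : quat :=
  Quat (q0 x + q0 y) (q1 x + q1 y) (q2 x + q2 y) (q3 x + q3 y).
Definition qscale (c : rat) (x : quat) : quat :=
  Quat (c * q0 x) (c * q1 x) (c * q2 x) (c * q3 x).
Definition qzero : quat := Quat 0 0 0 0.
Definition qone : quat := Quat 1 0 0 0.
Definition qmul (a b : rat) (x y : quat) : quat :=
  Quat (q0 x * q0 y + a * q1 x * q1 y + b * q2 x * q2 y - a * b * q3 x * q3 y)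
       (q0 x * q1 y + q1 x * q0 y - b * q2 x * q3 y + b * q3 x * q2 y)
       (q0 x * q2 y + q2 x * q0 y + a * q1 x * q3 y - a * q3 x * q1 y)
       (q0 x * q3 y + q3 x * q0 y + q1 x * q2 y - q2 x * q1 y).
Definition qnrd (a b : rat) (x : quat) : rat :=
  q0 x ^+ 2 - a * q1 x ^+ 2 - b * q2 x ^+ 2 + a * b * q3 x ^+ 2.

Definition val_ge (l : nat) (q : rat) (k : nat) : bool :=
  (q == 0) || (((l ^ k) %| `|numq q|)%N && coprime `|denq q| l).

(* B_l = B (x) Q_l has a nonzero element of reduced norm 0 (i.e. is not a
   division algebra).  Expressed without Q_l: by compactness of primitive
   vectors in Z_l^4 and density of Z^4, the norm form is isotropic over Q_l
   iff for every k there is an integer vector, primitive at l, whose reduced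
   norm has l-adic valuation >= k. *)
Definition isotropic_at (a b : rat) (l : nat) : Prop :=
  forall k : nat, exists v0 v1 v2 v3 : int,
    ~~ [&& (l%:Z %| v0)%Z, (l%:Z %| v1)%Z, (l%:Z %| v2)%Z & (l%:Z %| v3)%Z] /\
    val_ge l (qnrd a b (Quat v0%:~R v1%:~R v2%:~R v3%:~R)) k.

Definition ramified (a b : rat) (l : nat) : Prop :=
  prime l /\ ~ isotropic_at a b l.

Definition zloc (l : nat) (q : rat) : Prop := coprime `|denq q| l.
Definition zinvp (p : nat) (q : rat) : Prop := exists n : nat, (`|denq q| %| p ^ n)%N.

Definition qlin (c0 c1 c2 c3 : rat) (e0 e1 e2 e3 : quat) : quat :=
  qadd (qadd (qscale c0 e0) (qscale c1 e1)) (qadd (qscale c2 e2) (qscale c3 e3)).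

Definition qindep (e0 e1 e2 e3 : quat) : Prop :=
  forall c0 c1 c2 c3 : rat, qlin c0 c1 c2 c3 e0 e1 e2 e3 = qzero ->
    [/\ c0 = 0, c1 = 0, c2 = 0 & c3 = 0].

Definition lattice (A : rat -> Prop) (S : quat -> Prop) : Prop :=
  exists e0 e1 e2 e3 : quat, qindep e0 e1 e2 e3 /\
    forall x, S x <-> exists c0 c1 c2 c3 : rat,
      [/\ A c0, A c1, A c2 & A c3] /\ x = qlin c0 c1 c2 c3 e0 e1 e2 e3.

Definition qorder (a b : rat) (A : rat -> Prop) (S : quat -> Prop) : Prop :=
  lattice A S /\ S qone /\ (forall x y, S x -> S y -> S (qmul a b x y)).

Definition seteq (S T : quat -> Prop) : Prop := forall x, S x <-> T x.
Definition setI (S T : quat -> Prop) : quat -> Prop := fun x => S x /\ T x.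
Definition subset (S T : quat -> Prop) : Prop := forall x, S x -> T x.

(* maximal Z_(l)-orders of B: these correspond bijectively to the maximal
   orders of B_l, i.e. to the vertices of the Bruhat-Tits tree T_l *)
Definition maxorder (a b : rat) (l : nat) (S : quat -> Prop) : Prop :=
  qorder a b (zloc l) S /\
  forall S', qorder a b (zloc l) S' -> subset S S' -> seteq S' S.

Definition loc (l : nat) (R : quat -> Prop) : quat -> Prop :=
  fun x => exists s : nat, [/\ (0 < s)%N, coprime s l & R (qscale s%:R x)].

(* distance in the tree between two vertices (maximal orders):
   dist(S,S') = least m with l^m S contained in S' *)
Definition dist_le (l : nat) (S S' : quat -> Prop) (m : nat) : Prop :=
  forall x, S x -> S' (qscale (l ^ m)%:R x).
Definition tdist (l : nat) (S S' : quat -> Prop) (n : nat) : Prop :=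
  dist_le l S S' n /\ forall m, (m < n)%N -> ~ dist_le l S S' m.

Definition endpoints (a b : rat) (l : nat) (R S S' : quat -> Prop) (n : nat) : Prop :=
  [/\ maxorder a b l S, maxorder a b l S', tdist l S S' n & seteq (loc l R) (setI S S')].

Definition eichler (a b : rat) (p N : nat) (R : quat -> Prop) : Prop :=
  qorder a b (zinvp p) R /\
  forall l, prime l -> l <> p ->
    if (l %| N)%N then exists S S', endpoints a b l R S S' (logn l N)
    else maxorder a b l (loc l R).

Definition conjS (a b : rat) (g gi : quat) (S : quat -> Prop) : quat -> Prop :=
  fun y => exists x, S x /\ y = qmul a b (qmul a b g x) gi.

Record quad := Quad { kre : rat; kim : rat }.   (* kre + kim * sqrt d *)
Definition kmul (d : int) (x y : quad) : quad :=
  Quad (kre x * kre y + d%:~R * kim x * kim y) (kre x * kim y + kim x * kre y).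
Definition kadd (x y : quad) : quad := Quad (kre x + kre y) (kim x + kim y).
Definition kscale (c : rat) (x : quad) : quad := Quad (c * kre x) (c * kim x).
Definition kzero : quad := Quad 0 0.
Definition kone : quad := Quad 1 0.
Definition knorm (d : int) (x : quad) : rat := kre x ^+ 2 - d%:~R * kim x ^+ 2.
Definition kinv (d : int) (x : quad) : quad :=
  Quad (kre x / knorm d x) (- kim x / knorm d x).
Definition kpow (d : int) (x : quad) (n : nat) : quad := iter n (kmul d x) kone.

Definition isZ (q : rat) : bool := denq q == 1.
(* x in O_d = Z[(d + sqrt d)/2] *)
Definition inOd (d : int) (x : quad) : Prop :=
  isZ (2%:R * kim x) /\ isZ (kre x - d%:~R * kim x).
Definition inO (d : int) (p : nat) (x : quad) : Prop :=
  exists n : nat, inOd d (kscale (p ^ n)%:R x).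
Definition inOloc (d : int) (l : nat) (x : quad) : Prop :=
  exists s : nat, [/\ (0 < s)%N, coprime s l & inOd d (kscale s%:R x)].
(* x in the maximal order O_K (integral over Z) *)
Definition inOK (d : int) (x : quad) : Prop :=
  isZ (2%:R * kre x) /\ isZ (knorm d x).

Definition qalg_emb (a b : rat) (d : int) (psi : quad -> quat) : Prop :=
  [/\ forall x y, psi (kadd x y) = qadd (psi x) (psi y),
      forall x y, psi (kmul d x y) = qmul a b (psi x) (psi y),
      forall c : rat, psi (Quad c 0) = qscale c qone &
      injective psi].

Definition optimal (a b : rat) (d : int) (p : nat) (R : quat -> Prop)
    (psi : quad -> quat) : Prop :=
  qalg_emb a b d psi /\ forall x, R (psi x) <-> inO d p x.

(* distance from the vertex S to the geodesic G_psi; the vertices of G_psi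
   are the maximal Z_(l)-orders containing psi(O_K) *)
Definition onG (a b : rat) (d : int) (l : nat) (psi : quad -> quat)
    (V : quat -> Prop) : Prop :=
  maxorder a b l V /\ forall x, inOK d x -> V (psi x).
Definition distG (a b : rat) (d : int) (l : nat) (psi : quad -> quat)
    (S : quat -> Prop) (m : nat) : Prop :=
  (exists V, onG a b d l psi V /\ tdist l S V m) /\
  forall V m', onG a b d l psi V -> tdist l S V m' -> (m <= m')%N.

Definition rmorph_on (T : Type) (F : nzRingType) (P : T -> Prop)
    (add mul : T -> T -> T) (one : T) (f : T -> F) : Prop :=
  [/\ f one = 1,
      forall x y, P x -> P y -> f (add x y) = f x + f y &
      forall x y, P x -> P y -> f (mul x y) = f x * f y].

Definition setting (a b : rat) (p : nat) (Nm Np : nat) (R : quat -> Prop)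
    (d : int) (F : nat -> finFieldType) (nu : forall l, quat -> F l)
    (muF : forall l, quad -> F l) (S : nat -> quat -> Prop)
    (mu : nat -> quad -> int) : Prop :=
  [/\
      a != 0 /\ b != 0, prime p /\ ~ ramified a b p,
      (0 < Nm)%N /\ (forall l, prime l -> ((l %| Nm)%N <-> ramified a b l))
        /\ (forall l, prime l -> ~~ (l ^ 2 %| Nm)%N),
      (0 < Np)%N /\ coprime Np (Nm * p) /\ eichler a b p Np R &
    [/\ (* K = Q(sqrt d) a quadratic field, O_d an order *)
        (forall r : rat, r ^+ 2 != d%:~R) /\ ((d %% 4)%Z == 0 \/ (d %% 4)%Z == 1),
        ~~ ((p ^ 2)%N%:Z %| d)%Z /\ coprimez d Nm%:Z /\
          (forall l, prime l -> (l ^ 2 %| Np)%N -> ~~ (l%:Z %| d)%Z),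
        (forall l, prime l -> (l %| Nm)%N ->
           [/\ #|F l| = (l ^ 2)%N,
               rmorph_on quat (F l) (loc l R) qadd (qmul a b) qone (nu l) &
               rmorph_on quad (F l) (inOloc d l) kadd (kmul d) kone (muF l)]),
        (forall l, prime l -> (l %| Np)%N ->
           exists S', endpoints a b l R (S l) S' (logn l Np)) &
        (* orientation data at l | N^+, l not | d : an isomorphism
           K_l^x / O_l^x Q_l^x -> Z, given through K^x (dense in K_l^x) *)
        (forall l, prime l -> (l %| Np)%N -> ~~ (l%:Z %| d)%Z ->
           [/\ forall x y, x <> kzero -> y <> kzero ->
                 mu l (kmul d x y) = mu l x + mu l y,
               forall z : int, exists x, x <> kzero /\ mu l x = z &
               forall x, x <> kzero ->
                 (mu l x = 0 <-> exists m : int,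
                    inOloc d l (kscale ((l%:R : rat) ^ m) x) /\
                    inOloc d l (kinv d (kscale ((l%:R : rat) ^ m) x)))])]].

Definition oriented_opt (a b : rat) (p : nat) (Nm Np : nat) (R : quat -> Prop)
    (d : int) (F : nat -> finFieldType) (nu : forall l, quat -> F l)
    (muF : forall l, quad -> F l) (S : nat -> quat -> Prop)
    (mu : nat -> quad -> int) (psi : quad -> quat) : Prop :=
  [/\ optimal a b d p R psi,
      (forall l, prime l -> (l %| Nm)%N ->
         forall x, inOloc d l x -> nu l (psi x) = muF l x),
      (forall l, prime l -> (l %| Np)%N -> ~~ (l%:Z %| d)%Z ->
         exists t, [/\ t <> kzero, mu l t = 1 &
           endpoints a b l R (S l)
             (conjS a b (psi (kpow d t (logn l Np)))
                        (psi (kpow d (kinv d t) (logn l Np))) (S l))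
             (logn l Np)]) &
      (forall l, prime l -> (l %| Np)%N -> (l%:Z %| d)%Z ->
         exists S' m m', [/\ endpoints a b l R (S l) S' (logn l Np),
           distG a b d l psi (S l) m, distG a b d l psi S' m' & (m' < m)%N])].

(* Main.v *)
Require Import Defs.
From mathcomp Require Import all_boot all_order all_algebra ring.
From Stdlib Require Import FunctionalExtensionality PropExtensionality.
Import GRing.Theory.
Local Open Scope ring_scope.

Ltac qdes := rewrite /qmul /qadd /qscale /qone /qzero /=; congr Quat; ring.

Lemma qmulA a b u v w : qmul a b (qmul a b u v) w = qmul a b u (qmul a b v w).
Proof. move: u v w => [? ? ? ?] [? ? ? ?] [? ? ? ?]; qdes. Qed.
Lemma qmul1q a b u : qmul a b qone u = u.
Proof. move: u => [? ? ? ?]; qdes. Qed.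
Lemma qmulq1 a b u : qmul a b u qone = u.
Proof. move: u => [? ? ? ?]; qdes. Qed.
Lemma qmulDl a b u v w : qmul a b (qadd u v) w = qadd (qmul a b u w) (qmul a b v w).
Proof. move: u v w => [? ? ? ?] [? ? ? ?] [? ? ? ?]; qdes. Qed.
Lemma qmulDr a b u v w : qmul a b w (qadd u v) = qadd (qmul a b w u) (qmul a b w v).
Proof. move: u v w => [? ? ? ?] [? ? ? ?] [? ? ? ?]; qdes. Qed.
Lemma qmulZl a b c u v : qmul a b (qscale c u) v = qscale c (qmul a b u v).
Proof. move: u v => [? ? ? ?] [? ? ? ?]; qdes. Qed.
Lemma qmulZr a b c u v : qmul a b u (qscale c v) = qscale c (qmul a b u v).
Proof. move: u v => [? ? ? ?] [? ? ? ?]; qdes. Qed.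
Lemma qmul0q a b u : qmul a b qzero u = qzero.
Proof. move: u => [? ? ? ?]; qdes. Qed.
Lemma qmulq0 a b u : qmul a b u qzero = qzero.
Proof. move: u => [? ? ? ?]; qdes. Qed.
Lemma qscale1 u : qscale 1 u = u.
Proof. move: u => [? ? ? ?]; qdes. Qed.

Lemma qscale1n u : qscale (1%N)%:R u = u.
Proof. move: u => [? ? ? ?]; qdes. Qed.

Definition cj a b x y z := qmul a b (qmul a b x z) y.

Section Cj.
Variables (a b : rat) (x y : quat).
Hypotheses (xy : qmul a b x y = qone) (yx : qmul a b y x = qone).

Lemma cj_add u v : cj a b x y (qadd u v) = qadd (cj a b x y u) (cj a b x y v).
Proof. by rewrite /cj qmulDr qmulDl. Qed.
Lemma cj_scale c u : cj a b x y (qscale c u) = qscale c (cj a b x y u).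
Proof. by rewrite /cj qmulZr qmulZl. Qed.
Lemma cj_zero : cj a b x y qzero = qzero.
Proof. by rewrite /cj qmulq0 qmul0q. Qed.
Lemma cj_lin c0 c1 c2 c3 e0 e1 e2 e3 :
  cj a b x y (qlin c0 c1 c2 c3 e0 e1 e2 e3) =
  qlin c0 c1 c2 c3 (cj a b x y e0) (cj a b x y e1) (cj a b x y e2) (cj a b x y e3).
Proof. by rewrite /qlin !cj_add !cj_scale. Qed.
Lemma cj_mul u v : cj a b x y (qmul a b u v) = qmul a b (cj a b x y u) (cj a b x y v).
Proof.
have h w : qmul a b y (qmul a b x w) = w by rewrite -qmulA yx qmul1q.
by rewrite /cj !qmulA h.
Qed.
Lemma cj_one : cj a b x y qone = qone.
Proof. by rewrite /cj qmulq1. Qed.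
Lemma cjK z : cj a b y x (cj a b x y z) = z.
Proof. by rewrite /cj !qmulA yx qmulq1 -!qmulA yx qmul1q. Qed.
End Cj.
Arguments cjK {a b x y} yx z.
Arguments cj_mul {a b x y} yx u v.
Arguments cj_one {a b x y} xy.

Lemma qorder_cj a b A x y V : qmul a b x y = qone -> qmul a b y x = qone ->
  qorder a b A V -> qorder a b A (fun z => V (cj a b y x z)).
Proof.
move=> xy yx [[e0 [e1 [e2 [e3 [Hind HV]]]]] [V1 VM]]; split; last split.
- exists (cj a b x y e0), (cj a b x y e1), (cj a b x y e2), (cj a b x y e3); split.
  + move=> c0 c1 c2 c3 H; apply: Hind.
    rewrite -(cj_lin a b x y) in H.
    by have := f_equal (cj a b y x) H; rewrite (cjK yx) cj_zero.
  + move=> z; split.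
    * move=> /HV [c0 [c1 [c2 [c3 [HA E]]]]]; exists c0, c1, c2, c3; split => //.
      by rewrite -(cj_lin a b x y) -E (cjK xy).
    * move=> [c0 [c1 [c2 [c3 [HA ->]]]]]; apply/HV; exists c0, c1, c2, c3; split => //.
      by rewrite cj_lin !(cjK yx).
- by rewrite (cj_one yx).
- by move=> u v Hu Hv; rewrite (cj_mul xy); apply: VM.
Qed.

Lemma maxorder_cj a b l x y V : qmul a b x y = qone -> qmul a b y x = qone ->
  maxorder a b l V -> maxorder a b l (fun z => V (cj a b y x z)).
Proof.
move=> xy yx [HV Hmax]; split; first exact: qorder_cj.
move=> S' HS' Hsub.
have H1 : qorder a b (zloc l) (fun z => S' (cj a b x y z)) by exact: qorder_cj.
have H2 : seteq (fun z => S' (cj a b x y z)) V.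
  apply: Hmax => // w Vw; apply: Hsub; by rewrite (cjK yx).
move=> z; split.
- by move=> Sz; apply/H2; rewrite (cjK xy).
- by move=> /H2; rewrite (cjK xy).
Qed.

Lemma dist_le_cj a b l x y S V m : qmul a b x y = qone -> qmul a b y x = qone ->
  dist_le l S V m <-> dist_le l (fun z => S (cj a b y x z)) (fun z => V (cj a b y x z)) m.
Proof.
move=> xy yx; split.
- by move=> H z Sz; rewrite cj_scale; apply: H.
- move=> H z Sz; have := H (cj a b x y z); rewrite (cjK yx) cj_scale (cjK yx); exact.
Qed.

Lemma tdist_cj a b l x y S V m : qmul a b x y = qone -> qmul a b y x = qone ->
  tdist l S V m -> tdist l (fun z => S (cj a b y x z)) (fun z => V (cj a b y x z)) m.
Proof.
move=> xy yx [H1 H2]; split; first exact: (proj1 (dist_le_cj a b l x y S V m xy yx) H1).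
by move=> m' lt /(dist_le_cj a b l x y S V m' xy yx) /(H2 _ lt).
Qed.


Lemma fixS a b (S0 : quat -> Prop) x y : qmul a b x y = qone -> qmul a b y x = qone ->
  (forall u v, S0 u -> S0 v -> S0 (qmul a b u v)) -> S0 x -> S0 y ->
  (fun z => S0 (cj a b y x z)) = S0.
Proof.
move=> xy yx M Sx Sy; apply: functional_extensionality => z.
apply: propositional_extensionality; split.
- move=> H; rewrite -(cjK xy z); rewrite /cj; apply: (M) => //; exact: (M).
- move=> H; rewrite /cj; apply: (M) => //; exact: (M).
Qed.

Arguments fixS {a b S0 x y}.

Lemma distG_cj a b d l psi x y (S0 : quat -> Prop) m :
  qmul a b x y = qone -> qmul a b y x = qone ->
  (forall u v, S0 u -> S0 v -> S0 (qmul a b u v)) -> S0 x -> S0 y ->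
  distG a b d l psi S0 m -> distG a b d l (fun k => cj a b x y (psi k)) S0 m.
Proof.
move=> xy yx M Sx Sy [[V [[HV HVpsi] HT]] Hmin]; split.
- exists (fun z => V (cj a b y x z)); split.
  + split; first exact: maxorder_cj.
    by move=> k Hk /=; rewrite (cjK yx); apply: HVpsi.
  + rewrite -{1}(fixS xy yx M Sx Sy); exact: tdist_cj.
- move=> W m' [HW HWphi] HT'.
  apply: (Hmin (fun z => W (cj a b x y z))).
  + split; first exact: maxorder_cj.
    by move=> k Hk; apply: HWphi.
  + rewrite -(fixS yx xy M Sy Sx); exact: tdist_cj.
Qed.

Arguments distG_cj {a b d l psi x y S0 m}.

Lemma kscale1 w : kscale 1 w = w.
Proof. case: w => ? ?; rewrite /kscale /=; congr Quad; ring. Qed.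

Lemma end_facts a b l R S S' n z : endpoints a b l R S S' n -> loc l R z ->
  [/\ S z, S' z, (forall u v, S u -> S v -> S (qmul a b u v)) &
      (forall u v, S' u -> S' v -> S' (qmul a b u v))].
Proof.
move=> [[[_ [_ M1]] _] [[_ [_ M2]] _] _ Hl] Hz.
by case: ((Hl z).1 Hz) => ? ?; split.
Qed.

Arguments end_facts {a b l R S S' n z}.

Theorem lemma4p3 (a b : rat) (p Nm Np : nat) (R : quat -> Prop) (d : int)
    (F : nat -> finFieldType) (nu : forall l, quat -> F l)
    (muF : forall l, quad -> F l) (S : nat -> quat -> Prop)
    (mu : nat -> quad -> int) (psi : quad -> quat) (x y : quat) :
  setting a b p Nm Np R d F nu muF S mu ->
  oriented_opt a b p Nm Np R d F nu muF S mu psi ->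
  R x -> R y -> qmul a b x y = qone -> qmul a b y x = qone ->
  oriented_opt a b p Nm Np R d F nu muF S mu
    (fun k => qmul a b (qmul a b x (psi k)) y).
Proof.
move=> Hset [Hopt Hnu Hor Hram] Rx Ry xy yx.
case: Hset => _ _ _ [_ [_ [[_ [_ RM]] _]]] [_ _ HF _ _].
case: Hopt => [[Hadd Hmul Hsc Hinj] HR].
have Hpsc c k : psi (kscale c k) = qscale c (psi k).
  have -> : kscale c k = kmul d (Quad c 0) k.
    by case: k => ? ?; rewrite /kscale /kmul /=; congr Quad; ring.
  by rewrite Hmul Hsc qmulZl qmul1q.
have hyx w : qmul a b y (qmul a b x w) = w by rewrite -qmulA yx qmul1q.
have locR l z : R z -> loc l R z.
  move=> Rz; exists 1%N; split => //; first by rewrite coprime1n.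
  by rewrite qscale1n.
split.
- split; first split.
  + by move=> u v /=; rewrite Hadd qmulDr qmulDl.
  + by move=> u v /=; rewrite Hmul; exact: (cj_mul yx).
  + by move=> c /=; rewrite Hsc qmulZr qmulZl qmulq1 xy.
  + move=> u v /= E; apply: Hinj.
    change (cj a b x y (psi u) = cj a b x y (psi v)) in E.
    by rewrite -(cjK yx (psi u)) E cjK.
  + move=> k /=; split.
    * move=> H; apply/HR; rewrite -(cjK yx (psi k)) /cj.
      apply: (RM) => //; apply: (RM) => //.
    * move=> /HR H; apply: (RM) => //; apply: (RM) => //.
- move=> l Pl Dl k Hk /=.
  case: (HF l Pl Dl) => _ [nu1 _ nuM] _.
  have lP : loc l R (psi k).
    case: Hk => s [s0 cs Hs]; exists s; split => //; rewrite -Hpsc; apply/HR.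
    by exists 0%N; rewrite expn0 (_ : (1%:R : rat) = 1) // kscale1.
  have lxP : loc l R (qmul a b x (psi k)).
    case: lP => s [s0 cs Hs]; exists s; split => //; rewrite -qmulZr; exact: RM.
  have e1 := nuM _ _ lxP (locR l y Ry).
  have e2 := nuM _ _ (locR l x Rx) lP.
  have e3 := nuM _ _ (locR l x Rx) (locR l y Ry).
  rewrite xy nu1 in e3.
  rewrite Hnu // in e2.
  apply: etrans; first exact: e1.
  by rewrite e2 mulrAC -e3 mul1r.
- move=> l Pl Dl nd; case: (Hor l Pl Dl nd) => t [t0 mt Hend]; exists t; split => //.
  set P := psi (kpow d t (logn l Np)) in Hend *.
  set Q := psi (kpow d (kinv d t) (logn l Np)) in Hend *.
  case: (end_facts Hend (locR l x Rx)) => Sx S2x M1 M2.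
  case: (end_facts Hend (locR l y Ry)) => Sy S2y _ _.
  suff -> : conjS a b (qmul a b (qmul a b x P) y) (qmul a b (qmul a b x Q) y) (S l)
          = conjS a b P Q (S l) by [].
  apply: functional_extensionality => z; apply: propositional_extensionality; split.
  + move=> [w [Sw ->]].
    have -> : qmul a b (qmul a b (qmul a b (qmul a b x P) y) w) (qmul a b (qmul a b x Q) y)
            = cj a b x y (qmul a b (qmul a b P (cj a b y x w)) Q).
      by rewrite /cj !qmulA.
    rewrite /cj; apply: (M2) => //; apply: (M2) => //.
    exists (qmul a b (qmul a b y w) x); split => //.
    apply: (M1) => //; apply: (M1) => //.
  + move=> Hz.
    have : conjS a b P Q (S l) (cj a b y x z).
      rewrite /cj; apply: (M2) => //; apply: (M2) => //.
    move=> [w [Sw E]].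
    exists (cj a b x y w); split.
    * rewrite /cj; apply: (M1) => //; apply: (M1) => //.
    * rewrite -(cjK xy z) E /cj !qmulA !hyx //.
- move=> l Pl Dl dd; case: (Hram l Pl Dl dd) => S' [m [m' [Hend H1 H2 lt]]].
  exists S', m, m'; split => //.
  + case: (end_facts Hend (locR l x Rx)) => Sx S2x M1 M2.
    case: (end_facts Hend (locR l y Ry)) => Sy S2y _ _.
    exact: (distG_cj xy yx M1 Sx Sy H1).
  + case: (end_facts Hend (locR l x Rx)) => Sx S2x M1 M2.
    case: (end_facts Hend (locR l y Ry)) => Sy S2y _ _.
    exact: (distG_cj xy yx M2 S2x S2y H2).
Qed.
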